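(* Let $n\ge 1$. The Zeckendorf game on $n$, starting from $\{F_1^n\}$, can be played to its end (the Zeckendorf decomposition of $n$) using only splitting moves and $C_1$ moves if and only if $n=F_k-1$ for some integer $k\ge 2$.
   Context: Fibonacci numbers are indexed by $F_1=1$, $F_2=2$, $F_{i+1}=F_i+F_{i-1}$. A game state is a finite multiset of Fibonacci numbers (tracked by index); $\{F_1^n\}$ denotes $n$ copies of $F_1$. The legal moves are: $C_1$: replace $F_1,F_1$ by $F_2$; for $i\ge 2$, $C_i$: replace $F_{i-1},F_i$ by $F_{i+1}$ (a ''combining move''); $S_2$: replace $F_2,F_2$ by $F_1,F_3$; for $i\ge 3$, $S_i$: replace $F_i,F_i$ by $F_{i-2},F_{i+1}$ (a ''splitting move''). The game on $n$ starts at $\{F_1^n\}$ and ends when no legal move is available, which happens exactly at the Zeckendorf decomposition of $n$ (the unique representation of $n$ as a sum of $F_i$'s with distinct, pairwise non-consecutive indices). *)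

(* Defs.v *)
From mathcomp Require Import all_boot.
Set Implicit Arguments.
Unset Strict Implicit.
Unset Printing Implicit Defensive.

(* Fibonacci numbers with F_1 = 1, F_2 = 2, F_{i+1} = F_i + F_{i-1}. *)
Fixpoint fibp (m : nat) : nat :=
  match m with
  | 0 => 1
  | 1 => 2
  | (m'.+1 as p).+1 => fibp p + fibp m'
  end.
(* F k for k >= 1 (F 0 is unused; it equals F 1 by this encoding). *)
Definition F (k : nat) : nat := fibp k.-1.

(* A game state: multiset of Fibonacci numbers tracked by index;
   [s i] is the multiplicity of F_i (index 0 is unused). *)
Definition state := nat -> nat.

Inductive move : Type :=
| Comb of nat
| Split of nat.

Definition move_valid (m : move) : bool :=
  match m with
  | Comb i => 1 <= i
  | Split i => 2 <= i
  end.

Definition move_rem (m : move) : seq nat :=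
  match m with
  | Comb 1 => [:: 1; 1]
  | Comb i => [:: i.-1; i]
  | Split i => [:: i; i]
  end.

Definition move_add (m : move) : seq nat :=
  match m with
  | Comb i => [:: i.+1]
  | Split 2 => [:: 1; 3]
  | Split i => [:: i.-2; i.+1]
  end.

Definition legal (m : move) (s : state) : Prop :=
  move_valid m /\ forall j, count_mem j (move_rem m) <= s j.

Definition plays (m : move) (s t : state) : Prop :=
  legal m s /\
  forall j, t j = s j - count_mem j (move_rem m) + count_mem j (move_add m).

Definition split_or_C1 (m : move) : Prop :=
  match m with
  | Split _ => True
  | Comb i => i = 1
  end.

Inductive reach (P : move -> Prop) : state -> state -> Prop :=
| reach_refl s : reach P s s
| reach_step s t u m : P m -> plays m s t -> reach P t u -> reach P s u.

Definition terminal (s : state) : Prop := forall m, ~ legal m s.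

Definition start (n : nat) : state := fun j => if j == 1 then n else 0.

(* Main.v *)
Require Import Defs.
From mathcomp Require Import all_boot zify.
From Stdlib Require Import FunctionalExtensionality.
Set Implicit Arguments.
Unset Strict Implicit.


Definition e (p : nat) : state := fun x => (p == x : nat).

Lemma e_eq p : e p p = 1. Proof. by rewrite /e eqxx. Qed.
Lemma e_ne p x : p <> x -> e p x = 0.
Proof. by rewrite /e; case: eqP. Qed.
Lemma e_le1 p x : e p x <= 1. Proof. by rewrite /e; case: eqP. Qed.

Lemma cm1 a x : count_mem x [:: a] = e a x.
Proof. by rewrite /= addn0. Qed.
Lemma cm2 a b x : count_mem x [:: a; b] = e a x + e b x.
Proof. by rewrite /= addn0. Qed.

Lemma F1 : F 1 = 1. Proof. by []. Qed.
Lemma F2 : F 2 = 2. Proof. by []. Qed.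
Lemma F3 : F 3 = 3. Proof. by []. Qed.
Lemma Fs i : F i.+3 = F i.+2 + F i.+1. Proof. by []. Qed.
Lemma Fpos i : 0 < F i.
Proof.
rewrite /F; case: i => [|i] //=; elim: i {-2}i (leqnn i) => [|k IH] [|[|j]] //= Hj.
rewrite addn_gt0 IH //; lia.
Qed.
Lemma Fmono i : F i.+1 <= F i.+2.
Proof. case: i => [|i] //; rewrite Fs; lia. Qed.

Fixpoint D (s : state) (j : nat) : nat :=
  if j is j'.+1 then D s j' + s j'.+1 * F j'.+1 else 0.

Lemma D_plus f g j : D (fun x => f x + g x) j = D f j + D g j.
Proof. elim: j => //= j ->; rewrite mulnDl; lia. Qed.

Lemma D_lin t r s a j : (forall x, t x + r x = s x + a x) ->
  D t j + D r j = D s j + D a j.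
Proof.
move=> H; elim: j => //= j IH.
have := congr1 (fun z => z * F j.+1) (H j.+1); rewrite /= !mulnDl; lia.
Qed.

Lemma D_mono s t j : (forall x, s x <= t x) -> D s j <= D t j.
Proof. move=> H; elim: j => //= j IH; by apply: leq_add => //; apply: leq_mul. Qed.

Lemma D_e_out p j : j < p -> D (e p) j = 0.
Proof. elim: j => //= j IH H; rewrite IH; last lia. rewrite e_ne; lia. Qed.

Lemma D_e_in p j : 1 <= p <= j -> D (e p) j = F p.
Proof.
elim: j => [|j IH] /=; first lia.
move=> Hp; case: (ltngtP p j.+1) => H.
- rewrite IH; last lia. rewrite e_ne; lia.
- lia.
- rewrite H e_eq mul1n.
  by rewrite D_e_out.
Qed.



Ltac De := repeat first [rewrite D_e_in; last lia | rewrite D_e_out; last lia].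

Definition Qinv (s : state) := forall j k, 1 <= j -> j < k -> 0 < s k -> F j - 1 <= D s j.
Definition Inv n s := (exists B, (forall i, B < i -> s i = 0) /\ D s B = n) /\ Qinv s.

Lemma plays_eq m s t : plays m s t -> forall x,
  t x + count_mem x (move_rem m) = s x + count_mem x (move_add m).
Proof. move=> [[_ L] E] x; rewrite E; have := L x; lia. Qed.

Lemma inv_step n m s t : Inv n s -> split_or_C1 m -> plays m s t -> Inv n t.
Proof.
move=> [[B [HB HD]] Q] Pm Hp.
have L := (proj2 (proj1 Hp)).
case: m Pm Hp L => [i|i] /= Pm Hp L.
- subst i.
  have H x : t x + (e 1 x + e 1 x) = s x + e 2 x.
    rewrite -cm2 -cm1; exact: plays_eq Hp x.
  have Dl j : D t j + (D (e 1) j + D (e 1) j) = D s j + D (e 2) j.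
    by rewrite -(D_plus (e 1) (e 1)); apply: D_lin.
  have s1 : 2 <= s 1 by have := L 1.
  have B1 : 1 <= B by case: B HB {HD} => // /(_ 1 isT); lia.
  split.
  + exists B.+1; split.
    * move=> i Hi; have := H i; rewrite HB; last lia. rewrite !e_ne; lia.
    * have := Dl B.+1; De; rewrite /= HD (HB B.+1) // F1 F2; lia.
  + move=> j k Hj Hk Htk; case: (ltnP 1 j) => Hj1; last first.
      have -> : j = 1 by lia. rewrite F1; lia.
    have := Dl j; De; rewrite F1 F2 => Dj.
    have := Q j k Hj Hk; have := H k; rewrite !e_ne; try lia.
- have i2 : 2 <= i by case: Hp => [[]].
  have si : 2 <= s i by have := L i; rewrite /= eqxx.
  have Bi : i <= B by case: (leqP i B) => // /HB; lia.
  case: i i2 si Bi Pm Hp L => [|[|[|p]]] // _ si Bi _ Hp L.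
  + have H x : t x + (e 2 x + e 2 x) = s x + (e 1 x + e 3 x).
      rewrite -!cm2; exact: plays_eq Hp x.
    have Dl j : D t j + (D (e 2) j + D (e 2) j) = D s j + (D (e 1) j + D (e 3) j).
      by rewrite -(D_plus (e 2) (e 2)) -(D_plus (e 1) (e 3)); apply: D_lin.
    split.
    * exists B.+1; split.
      -- move=> i Hi; have := H i; rewrite HB; last lia. rewrite !e_ne; lia.
      -- have := Dl B.+1; De; rewrite /= HD (HB B.+1) // F1 F2 F3; lia.
    * move=> j k Hj Hk Htk; case: (ltnP 2 j) => Hj1.
        have := Dl j; De; rewrite F1 F2 F3 => Dj.
        have := Q j k Hj Hk; have := H k; rewrite !e_ne; try lia.
      case: (ltnP 1 j) => Hj2; last first.
        have -> : j = 1 by lia. rewrite F1; lia.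
      have -> : j = 2 by lia.
      have := H 1; have := H 2; rewrite /= /e /= F1 F2; lia.
  + have H x : t x + (e p.+3 x + e p.+3 x) = s x + (e p.+1 x + e p.+4 x).
      rewrite -!cm2; exact: plays_eq Hp x.
    have Dl j : D t j + (D (e p.+3) j + D (e p.+3) j) = D s j + (D (e p.+1) j + D (e p.+4) j).
      by rewrite -(D_plus (e p.+3) (e p.+3)) -(D_plus (e p.+1) (e p.+4)); apply: D_lin.
    have F4 := Fs p.+1; have F3' := Fs p.
    split.
    * exists B.+1; split.
      -- move=> i Hi; have := H i; rewrite HB; last lia. rewrite !e_ne; lia.
      -- have := Dl B.+1; De; rewrite /= HD (HB B.+1) //; lia.
    * move=> j k Hj Hk Htk.
      have Qp := Q j p.+3 Hj.
      case: (leqP j p.+2) => Hj1.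
        have := Dl j; De; have := Qp; lia.
      case: (leqP j p.+3) => Hj2.
        have Ej : j = p.+3 by lia. subst j.
        have := Dl p.+3; De; have -> : D s p.+3 = D s p.+2 + s p.+3 * F p.+3 by [].
        have := Q p.+2 p.+3 isT (ltnSn _); have : 2 * F p.+3 <= s p.+3 * F p.+3 by apply: leq_mul.
        lia.
      have := Dl j; De => Dj.
      have := Q j k Hj Hk; have := H k; rewrite !e_ne; try lia.
Qed.


Lemma inv_reach n s u : reach split_or_C1 s u -> Inv n s -> Inv n u.
Proof. elim=> // s0 t0 u0 m Pm Hp _ IH Hs; apply: IH; exact: inv_step Hs Pm Hp. Qed.

Lemma inv_start n : Inv n (start n).
Proof.
split.
- exists 1; split; first by move=> [|[|i]].
  by rewrite /= /start /= F1 muln1.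
- move=> j k Hj Hk; rewrite /start; case: eqP => //; lia.
Qed.

Lemma term_le1 t x : terminal t -> 1 <= x -> t x <= 1.
Proof.
move=> T Hx; case: (leqP (t x) 1) => // H; exfalso.
case: x Hx H => [|[|x]] // _ H.
- apply: (T (Comb 1)); split => // j; rewrite cm2 /e; case: eqP => [<-|] /=; lia.
- apply: (T (Defs.Split x.+2)); split => // j; rewrite cm2 /e; case: eqP => [<-|] /=; lia.
Qed.

Lemma term_nc t x : terminal t -> 0 < t x.+1 -> 0 < t x.+2 -> False.
Proof.
move=> T H1 H2; apply: (T (Comb x.+2)); split => // j.
rewrite (cm2 x.+1 x.+2 j) /e.
case: eqP => [<-|A]; case: eqP => [E|B] /=; try subst j; lia.
Qed.

Lemma term_bound t j : terminal t -> D t j <= F j.+1 - 1 /\ D t j.+1 <= F j.+2 - 1.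
Proof.
move=> T; elim: j => [|j [IH1 IH2]].
- split => //=; rewrite F1 F2; have := @term_le1 t 1 T isT; lia.
- split => //.
  have Fj := Fs j; have Fp := Fpos j.+1.
  have -> : D t j.+2 = D t j.+1 + t j.+2 * F j.+2 by [].
  case: (posnP (t j.+2)) => H.
    rewrite H; have := Fmono j.+1; lia.
  have -> : t j.+2 = 1 by have := @term_le1 t j.+2 T isT; lia.
  case: (posnP (t j.+1)) => H'; last by case: (term_nc T H' H).
  have -> : D t j.+1 = D t j + t j.+1 * F j.+1 by [].
  rewrite H'; lia.
Qed.

Lemma term_exact t p : terminal t -> Qinv t -> 1 <= p -> 0 < t p -> D t p = F p.+1 - 1.
Proof.
move=> T Q; case: p => [|[|q]] // _ Hp.
- have := @term_le1 t 1 T isT; rewrite /= F1 F2; lia.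
- have H' : t q.+1 = 0 by case: (posnP (t q.+1)) => // H; case: (term_nc T H Hp).
  have := Q q.+1 q.+2 isT (ltnSn _) Hp.
  have [B1 _] := term_bound q T.
  have Fq := Fs q.+1; have Fq2 := Fs q; have Fp := Fpos q.+1.
  have -> : D t q.+2 = D t q + t q.+1 * F q.+1 + t q.+2 * F q.+2 by [].
  have -> : D t q.+1 = D t q + t q.+1 * F q.+1 by [].
  have -> : t q.+2 = 1 by have := @term_le1 t q.+2 T isT; lia.
  rewrite H'; lia.
Qed.

Lemma top_exists t B : D t B = 0 \/ exists p, [/\ 1 <= p <= B, 0 < t p & D t B = D t p].
Proof.
elim: B => [|B [IH|[p [H1 H2 H3]]]]; first by left.
- case: (posnP (t B.+1)) => H.
    by left; rewrite /= IH H.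
  by right; exists B.+1; split; [lia|lia|].
- case: (posnP (t B.+1)) => H.
    by right; exists p; split => //; [lia | rewrite /= H mul0n addn0].
  by right; exists B.+1; split; [lia|lia|].
Qed.

Lemma only_if n t : 1 <= n -> reach split_or_C1 (start n) t -> terminal t ->
  exists k, 2 <= k /\ n = F k - 1.
Proof.
move=> Hn R T; have [[B [_ HD]] Q] := inv_reach R (inv_start n).
case: (top_exists t B) => [H|[p [H1 H2 H3]]]; first lia.
exists p.+1; split; first lia.
by rewrite -HD H3 (term_exact T Q) //; lia.
Qed.


Arguments e : simpl never.

Fixpoint A (m : nat) : state :=
  match m with
  | 0 => fun _ => 0
  | 1 => e 1
  | m'.+2 => fun x => A m' x + e m'.+2 x
  end.

Notation P := split_or_C1.

Definition nxt (m : move) (s : state) : state :=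
  fun j => s j - count_mem j (move_rem m) + count_mem j (move_add m).

Lemma step m s u : P m -> legal m s -> reach P (nxt m s) u -> reach P s u.
Proof. move=> Pm L R; apply: reach_step Pm _ R; by split. Qed.

Lemma reach_trans s t u : reach P s t -> reach P t u -> reach P s u.
Proof. elim=> // s0 t0 u0 m Pm Hp _ IH R; exact: reach_step Pm Hp (IH R). Qed.

Lemma liftR s u Y : reach P s u -> reach P (fun x => s x + Y x) (fun x => u x + Y x).
Proof.
elim=> [s0|s0 t0 u0 m0 Pm [[v L] E] _ IH]; first by constructor.
apply: reach_step Pm _ IH; split.
- split => // j; have := L j; lia.
- move=> j; rewrite E; have := L j; lia.
Qed.

Lemma reach_eq s s' u u' : reach P s u -> s' = s -> u' = u -> reach P s' u'.
Proof. by move=> R -> ->. Qed.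

Lemma legal_C1 s : 2 <= s 1 -> legal (Comb 1) s.
Proof. move=> H; split => // j; rewrite cm2 /e; case: eqP => [<-|] /=; lia. Qed.

Lemma legal_S i s : 2 <= i -> 2 <= s i -> legal (Defs.Split i) s.
Proof. move=> Hi H; split => // j; rewrite cm2 /e; case: eqP => [<-|] /=; lia. Qed.

Lemma nxt_C1 s : nxt (Comb 1) s = fun x => s x - (e 1 x + e 1 x) + e 2 x.
Proof. apply: functional_extensionality => x; by rewrite /nxt -cm2 -cm1. Qed.
Lemma nxt_S2 s : nxt (Defs.Split 2) s = fun x => s x - (e 2 x + e 2 x) + (e 1 x + e 3 x).
Proof. apply: functional_extensionality => x; by rewrite /nxt -!cm2. Qed.
Lemma nxt_S i s : nxt (Defs.Split i.+3) s =
  fun x => s x - (e i.+3 x + e i.+3 x) + (e i.+1 x + e i.+4 x).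
Proof. apply: functional_extensionality => x; by rewrite /nxt -!cm2. Qed.

Ltac feq := apply: functional_extensionality => x /=; lia.

Lemma T_lem q : reach P (fun x => A q.+1.-2 x + e q.+1 x + e q.+1 x) (A q.+2)
             /\ reach P (fun x => A q.+2.-2 x + e q.+2 x + e q.+2 x) (A q.+3).
Proof.
elim: q => [|q [IH1 IH2]].
- split.
  + apply: (@step (Comb 1)) => //; first by apply: legal_C1 => /=; rewrite e_eq.
    apply: reach_eq (reach_refl _ _) _ erefl; rewrite nxt_C1; feq.
  + apply: (@step (Defs.Split 2)) => //; first by apply: legal_S => //=; rewrite e_eq.
    apply: reach_eq (reach_refl _ _) _ erefl; rewrite nxt_S2; feq.
- split => //.
  case: q IH1 IH2 => [|q] IH1 IH2.
  + (* T 3 : e1 + 2 e3 -> 2e1 + e4 -> e2 + e4 *)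
    apply: (@step (Defs.Split 3)) => //; first by apply: legal_S => //=; rewrite e_eq.
    rewrite (nxt_S 0).
    apply: (@step (Comb 1)) => //; first by apply: legal_C1; rewrite /e /=.
    apply: reach_eq (reach_refl _ _) _ erefl; rewrite nxt_C1; feq.
  + apply: (@step (Defs.Split q.+4)) => //; first by apply: legal_S => //=; rewrite e_eq; lia.
    rewrite (nxt_S q.+1).
    apply: reach_eq (liftR (e q.+4.+1) IH1) _ erefl; feq.
Qed.

Lemma Tlem j : 0 < j -> reach P (fun x => A j.-2 x + e j x + e j x) (A j.+1).
Proof. by case: j => // q _; case: (T_lem q). Qed.




Lemma Z_lem p : reach P (fun x => A p.+1 x + A p x + e 1 x) (A p.+2)
             /\ reach P (fun x => A p.+2 x + A p.+1 x + e 1 x) (A p.+3).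
Proof.
elim: p => [|p [IH1 IH2]].
- split.
  + apply: (@step (Comb 1)) => //; first by apply: legal_C1 => /=; rewrite e_eq.
    apply: reach_eq (reach_refl _ _) _ erefl; rewrite nxt_C1; feq.
  + apply: (@step (Comb 1)) => //; first by apply: legal_C1 => /=; rewrite /e.
    rewrite nxt_C1.
    apply: (@step (Defs.Split 2)) => //; first by apply: legal_S => //=; rewrite /e.
    apply: reach_eq (reach_refl _ _) _ erefl; rewrite nxt_S2; feq.
- split => //.
  have R1 := liftR (fun x => e p.+2 x + e p.+3 x) IH1.
  have R2 := liftR (e p.+3) (Tlem (j := p.+2) isT).
  have R3 := Tlem (j := p.+3) isT.
  apply: reach_trans (reach_eq R1 _ erefl) _; first feq.
  apply: reach_trans (reach_eq R2 _ erefl) _; first feq.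
  apply: reach_eq R3 _ erefl; feq.
Qed.

Lemma start_add a b : start (a + b) = fun x => start a x + start b x.
Proof. apply: functional_extensionality => x; rewrite /start; by case: eqP. Qed.
Lemma start1 : start 1 = e 1.
Proof. apply: functional_extensionality => x; rewrite /start /e eq_sym; by case: eqP. Qed.

Lemma S_lem p : reach P (start (F p.+2 - 1)) (A p.+1)
             /\ reach P (start (F p.+3 - 1)) (A p.+2).
Proof.
elim: p => [|p [IH1 IH2]].
- split.
  + by rewrite F2 start1; constructor.
  + rewrite F3.
    apply: (@step (Comb 1)) => //; first by apply: legal_C1.
    apply: reach_eq (reach_refl _ _) _ erefl; rewrite nxt_C1.
    apply: functional_extensionality => x /=; rewrite /start.
    case: (x =P 1) => [->|H]; first by rewrite /e.
    rewrite e_ne; last by move=> E; apply: H. lia.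
- split => //.
  have Fq := Fs p.+1; have Fq2 := Fs p; have F1p := Fpos p.+1; have F2p := Fpos p.+2.
  have -> : F p.+4 - 1 = (F p.+3 - 1) + ((F p.+2 - 1) + 1) by lia.
  rewrite !start_add start1.
  have R1 := liftR (fun x => start (F p.+2 - 1) x + e 1 x) IH2.
  have R2 := liftR (fun x => A p.+2 x + e 1 x) IH1.
  have R3 := proj2 (Z_lem p).
  apply: reach_trans (reach_eq R1 erefl erefl) _.
  apply: reach_trans (reach_eq R2 _ erefl) _; first feq.
  apply: reach_eq R3 _ erefl; feq.
Qed.




Definition Aprop m := forall x, A m x <= 1 /\ (m < x -> A m x = 0) /\ (0 < A m x -> A m x.+1 = 0).

Lemma A_prop m : Aprop m /\ Aprop m.+1.
Proof.
elim: m => [|m [IH1 IH2]].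
- split => x /=; first by split => //; split.
  split; first exact: e_le1.
  split; first by move=> Hx; rewrite e_ne; lia.
  move=> Hx; rewrite e_ne //; move=> E; have x0 : x = 0 by lia. by move: Hx; rewrite x0 /e.
- split => // x /=.
  case: (x =P m.+2) => [->|Hx].
  + have [_ [H2 _]] := IH1 m.+2; have [_ [H2' _]] := IH1 m.+3.
    rewrite e_eq H2 // e_ne // H2' //; lia.
  + rewrite (e_ne (p := m.+2)); last by move=> E; apply: Hx.
    have [H1 [H2 H3]] := IH1 x.
    split; first lia. split; first lia.
    move=> Hp. have Hxm : x <= m by case: (leqP x m) => // /H2; lia.
    rewrite H3 ?e_ne; lia.
Qed.

Lemma A_term m : terminal (A m).
Proof.
have [H _] := A_prop m.
move=> [[|[|i]]|i] [V L] //.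
- have := L 1; rewrite cm2 e_eq; have := H 1; lia.
- have := L i.+1; have := L i.+2; rewrite !cm2 !e_eq !e_ne; try lia.
  have [_ [_ H3]] := H i.+1; lia.
- have := L i; rewrite cm2 e_eq; have := H i; lia.
Qed.


Theorem theorem1p3 (n : nat) : 1 <= n ->
  (exists t : state, reach split_or_C1 (start n) t /\ terminal t) <->
  (exists k : nat, 2 <= k /\ n = F k - 1).
Proof.
move=> Hn; split.
- by move=> [t [R Tt]]; exact: only_if Hn R Tt.
- move=> [[|[|p]] [Hk ->]] //.
  exists (A p.+1); split; first exact: (proj1 (S_lem p)).
  exact: A_term.
Qed.
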